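(* Let $\sigma$ be a Frobenius endomorphism of $\mathcal{E}^r_{T,K}$ and write $P(T)=\sigma(T)=\sum_{n\in\mathbb{Z}}a_nT^n$. Let $v\in\tilde{\mathbf{A}}$ be a solution of $\mathbf{Frob}(x)=P(x)$ (where $P(x)=\sum_n a_nx^n$) with $w_0(v)=1$. Then $v\in\tilde{\mathbf{A}}^r$.
   Context: $k$ finite of characteristic $p$, $K=W(k)[1/p]$, $v_p(p)=1$, $r>0$, $F=k((T))$. $\mathcal{E}^r_{T,K}$: Laurent series $\sum a_nT^n$, $a_n\in K$, with $v_p(a_n)$ bounded below and some $c$ with $v_p(a_n)-\log_p(-n)/r\ge c$ for all $n<0$. A Frobenius endomorphism of $\mathcal{E}^r_{T,K}$: ring endomorphism restricting to the Witt Frobenius on $K$, preserving integral elements, with $\sigma(a)\equiv a^p\bmod p$. $\tilde{\mathbf{A}}=W(\widehat{F^{alg}})$ ($v_T(T)=1$), elements $\sum_{n\ge0}[x_n]p^n$ with Teichmüller lifts; $\mathbf{Frob}$ the Witt vector Frobenius; $w_k(x)=\min_{n\le k}v_T(x_n)$. $\tilde{\mathbf{A}}^r=\{x\in\tilde{\mathbf{A}}:\exists c>0,\ v_T(x_n)\ge-p^{nr}c\ \forall n\}$. *)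

(* Defs.v *)
From HB Require Import structures.
From mathcomp Require Import all_boot all_order all_algebra.
From mathcomp Require Import all_classical all_reals all_analysis.
Unset Implicit Arguments. Unset Strict Implicit. Unset Printing Implicit Defensive.
Import Order.TTheory GRing.Theory Num.Theory.
Local Open Scope ring_scope.

(* The field  C = \widehat{F^alg},  F = k((T)), given axiomatically up to     *)
(* isometric isomorphism: an algebraically closed field, complete for a       *)
(* valuation vT, containing k (via ik) and an element T0 (the image of T)     *)
(* with vT T0 = 1, in which the elements algebraic over k(T0) are dense.      *)
Section Fhat.
Variables (R : realType) (k : finFieldType) (C : closedFieldType)
  (ik : {rmorphism k -> C}) (vT : C -> \bar R) (T0 : C).

Definition is_valuation : Prop :=
  (forall x, vT x = +oo%E <-> x = 0) /\ (forall x, vT x != -oo%E) /\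
  (forall x y, vT (x * y) = (vT x + vT y)%E) /\
  (forall x y, (Order.min (vT x) (vT y) <= vT (x + y))%E).

Definition vT_complete : Prop := forall s : nat -> C,
  (forall M : R, exists N : nat, forall m n : nat, (N <= m)%N -> (N <= n)%N ->
     (M%:E <= vT (s m - s n))%E) ->
  exists l : C, forall M : R, exists N : nat, forall n : nat, (N <= n)%N ->
     (M%:E <= vT (s n - l))%E.

Definition alg_over_kT (a : C) : Prop := exists q : {poly {poly k}}, q != 0 /\
  (map_poly (fun f : {poly k} => (map_poly ik f).[T0]) q).[a] = 0.

Definition dense_alg : Prop := forall (c : C) (M : R),
  exists a : C, alg_over_kT a /\ (M%:E <= vT (c - a))%E.

Record Fhat_setup : Prop := {
  Fhat_val : is_valuation;
  Fhat_T0 : vT T0 = 1%:E;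
  Fhat_complete : vT_complete;
  Fhat_dense : dense_alg }.
End Fhat.

(* Atilde = W(C), given axiomatically as the strict p-ring with residue      *)
(* field C: OA (= Atilde) is a subring of the field L (= Atilde[1/p]),        *)
(* L = OA[1/p], OA is p-torsion free, p-adically separated and complete,     *)
(* red : OA -> C is a surjective ring morphism with kernel p OA, and teich   *)
(* is the (multiplicative) Teichmuller section.                              *)
Section Witt.
Variables (R : realType) (p : nat) (k : finFieldType) (C : closedFieldType)
  (ik : {rmorphism k -> C}) (vT : C -> \bar R)
  (L : fieldType) (OA : {pred L}) (red : L -> C) (teich : C -> L).

Definition inPow (m : int) (x : L) : Prop :=
  exists2 y, y \in OA & x = (p%:R : L) ^ m * y.

Record strict_p_setup : Prop := {
  OA_one : 1 \in OA;
  OA_sub : forall x y, x \in OA -> y \in OA -> x - y \in OA;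
  OA_mul : forall x y, x \in OA -> y \in OA -> x * y \in OA;
  red_add : forall x y, x \in OA -> y \in OA -> red (x + y) = red x + red y;
  red_mul : forall x y, x \in OA -> y \in OA -> red (x * y) = red x * red y;
  red_one : red 1 = 1;
  red_ker : forall x, x \in OA -> (red x = 0 <-> inPow 1 x);
  p_neq0 : (p%:R : L) != 0;
  L_frac : forall x : L, exists m : nat, (p%:R : L) ^+ m * x \in OA;
  OA_sep : forall x, (forall m : nat, inPow m x) -> x = 0;
  OA_complete : forall s : nat -> L, (forall n, s n \in OA) ->
     (forall n : nat, inPow n (s n.+1 - s n)) ->
     exists2 l, l \in OA & forall n : nat, inPow n (l - s n);
  teich_OA : forall c, teich c \in OA;
  teich_mul : forall c d, teich (c * d) = teich c * teich d;
  teich_red : forall c, red (teich c) = c }.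

Definition teich_exp (d : nat -> C) (x : L) : Prop :=
  forall N : nat, inPow N (x - \sum_(n < N) teich (d n) * (p%:R : L) ^+ n).

(* K = W(k)[1/p] inside L *)
Definition inK (x : L) : Prop := exists m : nat,
  exists2 d, teich_exp d ((p%:R : L) ^+ m * x) & forall n, exists a : k, d n = ik a.

(* Witt vector Frobenius on L = W(C)[1/p] : Frob x = y *)
Definition FrobR (x y : L) : Prop := exists m : nat,
  exists2 d, teich_exp d ((p%:R : L) ^+ m * x) &
             teich_exp (fun n => d n ^+ p) ((p%:R : L) ^+ m * y).

Definition vp_ge (x : L) (t : R) : Prop := exists2 m : int, t <= m%:~R & inPow m x.

Definition logp (x : R) : R := ln x / ln (p%:R : R).

(* Laurent series sum_n f n T^n, coefficients f : int -> L *)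
Definition inEr (r : R) (f : int -> L) : Prop :=
  (forall n, inK (f n)) /\ (exists c : R, forall n, vp_ge (f n) c) /\
  (exists c : R, forall n : int, n < 0 -> vp_ge (f n) (c + logp (- n)%:~R / r)).

Definition symsum (s : int -> L) (N : nat) : L :=
  \sum_(i < (N.*2).+1) s (i%:Z - N%:Z).

Definition psum_to (s : int -> L) (l : L) : Prop :=
  forall M : int, exists N : nat, forall N' : nat, (N <= N')%N -> inPow M (l - symsum s N').

Definition mulE (f g h : int -> L) : Prop :=
  forall n : int, psum_to (fun i => f i * g (n - i)) (h n).
Definition addE (f g : int -> L) : int -> L := fun n => f n + g n.
Definition cstE (c : L) : int -> L := fun n => if n == 0 then c else 0.
Definition TE : int -> L := fun n => if n == 1 then 1 else 0.
Fixpoint powE (f : int -> L) (j : nat) (q : int -> L) : Prop :=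
  if j is j'.+1 then exists q', powE f j' q' /\ mulE q' f q else q = cstE 1.
Definition integralE (f : int -> L) : Prop := forall n, f n \in OA.

Record frobenius_endo (r : R) (sigma : (int -> L) -> (int -> L)) : Prop := {
  fe_stable : forall f, inEr r f -> inEr r (sigma f);
  fe_add : forall f g, inEr r f -> inEr r g -> sigma (addE f g) = addE (sigma f) (sigma g);
  fe_mul : forall f g h, inEr r f -> inEr r g -> inEr r h -> mulE f g h ->
             mulE (sigma f) (sigma g) (sigma h);
  fe_one : sigma (cstE 1) = cstE 1;
  fe_K : forall c, inK c -> exists2 c', FrobR c c' & sigma (cstE c) = cstE c';
  fe_int : forall f, inEr r f -> integralE f -> integralE (sigma f);
  fe_modp : forall f q, inEr r f -> integralE f -> powE f p q ->
             forall n, inPow 1 (sigma f n - q n) }.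

(* weak topology on Atilde: x in OA with w_j(x) >= M *)
Definition weak_small (j : nat) (M : R) (x : L) : Prop :=
  x \in OA /\ forall d, teich_exp d x -> forall i, (i <= j)%N -> (M%:E <= vT (d i))%E.

Definition weak_sum_to (s : int -> L) (y : L) : Prop :=
  forall (j : nat) (M : R), exists N : nat, forall N' : nat, (N <= N')%N ->
    weak_small j M (y - symsum s N').
End Witt.

(* Main.v *)
Require Import Defs.
From HB Require Import structures.
From mathcomp Require Import all_boot all_order all_algebra.
From mathcomp Require Import all_classical all_reals all_analysis.
From mathcomp Require Import ring lra finfield.
Import Order.TTheory GRing.Theory Num.Theory.
Set Implicit Arguments. Unset Strict Implicit. Unset Printing Implicit Defensive.
Local Open Scope ring_scope.

Section Part1.
Variables (p : nat) (C : closedFieldType) (L : fieldType) (OA : {pred L})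
  (red : L -> C) (teich : C -> L).
Hypothesis Hp : prime p.
Hypothesis HS : strict_p_setup p C L OA red teich.
Variables (R : realType) (vT : C -> \bar R).
Hypothesis Hval : is_valuation R C vT.
Local Notation P := (p%:R : L).

Lemma oa1 : 1 \in OA. Proof. by case: HS. Qed.
Lemma oaB x y : x \in OA -> y \in OA -> x - y \in OA. Proof. by case: HS => _ H *; apply: H. Qed.
Lemma oaM x y : x \in OA -> y \in OA -> x * y \in OA. Proof. by case: HS => _ _ H *; apply: H. Qed.
Lemma oa0 : 0 \in OA. Proof. by rewrite -(subrr 1) oaB // oa1. Qed.
Lemma oaN x : x \in OA -> - x \in OA. Proof. by move=> h; rewrite -sub0r oaB // oa0. Qed.
Lemma oaD x y : x \in OA -> y \in OA -> x + y \in OA.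
Proof. by move=> hx hy; rewrite -[y]opprK oaB // oaN. Qed.
Lemma oan n : n%:R \in OA.
Proof. elim: n => [|n IH]; first exact: oa0. by rewrite -addn1 natrD oaD // oa1. Qed.
Lemma oaX x n : x \in OA -> x ^+ n \in OA.
Proof. move=> hx; elim: n => [|n IH]; first by rewrite expr0 oa1. by rewrite exprS oaM. Qed.
Lemma oaP : P \in OA. Proof. exact: oan. Qed.
Lemma oa_sum (I : Type) (s : seq I) (F : I -> L) :
  (forall i, F i \in OA) -> \sum_(i <- s) F i \in OA.
Proof. move=> h; apply: (big_ind (fun x => x \in OA)) => //; [exact: oa0 | exact: oaD]. Qed.
Lemma teich_oa c : teich c \in OA. Proof. by case: HS. Qed.
Lemma teichM c d : teich (c * d) = teich c * teich d. Proof. by case: HS. Qed.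
Lemma teichK c : red (teich c) = c. Proof. by case: HS. Qed.
Lemma P_neq0 : P != 0. Proof. by case: HS. Qed.
Lemma redD x y : x \in OA -> y \in OA -> red (x + y) = red x + red y. Proof. by case: HS => *; auto. Qed.
Lemma redM x y : x \in OA -> y \in OA -> red (x * y) = red x * red y. Proof. by case: HS => *; auto. Qed.
Lemma red1 : red 1 = 1. Proof. by case: HS. Qed.
Lemma red0 : red 0 = 0.
Proof. by have := redD oa0 oa0; rewrite addr0 -{1}[red 0]addr0 => /addrI <-. Qed.
Lemma redN x : x \in OA -> red (- x) = - red x.
Proof. by move=> hx; have := redD hx (oaN hx); rewrite subrr red0 => /esym/eqP; rewrite addr_eq0 => /eqP ->; rewrite opprK. Qed.
Lemma redB x y : x \in OA -> y \in OA -> red (x - y) = red x - red y.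
Proof. by move=> hx hy; rewrite redD ?oaN // redN. Qed.

Definition pm (N : nat) (x : L) := exists2 y, y \in OA & x = P ^+ N * y.

Lemma inPowE (N : nat) x : inPow p L OA N x <-> pm N x.
Proof. by []. Qed.
Lemma pm_oa N x : pm N x -> x \in OA.
Proof. by case=> y hy ->; rewrite oaM // oaX // oaP. Qed.
Lemma pm0x x : x \in OA -> pm 0 x. Proof. by move=> h; exists x; rewrite ?expr0 ?mul1r. Qed.
Lemma pm0 N : pm N 0. Proof. by exists 0; rewrite ?mulr0 // oa0. Qed.
Lemma pmB N x y : pm N x -> pm N y -> pm N (x - y).
Proof. by case=> a ha ->; case=> b hb ->; exists (a - b); rewrite ?oaB // mulrBr. Qed.
Lemma pmN N x : pm N x -> pm N (- x).
Proof. by move=> h; rewrite -sub0r; apply: pmB h; apply: pm0. Qed.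
Lemma pmD N x y : pm N x -> pm N y -> pm N (x + y).
Proof. by move=> hx hy; rewrite -[y]opprK; apply: pmB => //; apply: pmN. Qed.
Lemma pmMr N x y : pm N x -> y \in OA -> pm N (x * y).
Proof. by case=> a ha -> hy; exists (a * y); rewrite ?oaM // mulrA. Qed.
Lemma pmMl N x y : pm N x -> y \in OA -> pm N (y * x).
Proof. by move=> h hy; rewrite mulrC; apply: pmMr. Qed.
Lemma pm_le M N x : (M <= N)%N -> pm N x -> pm M x.
Proof.
move=> hMN [a ha ->]; exists (P ^+ (N - M) * a); first by rewrite oaM ?oaX ?oaP.
by rewrite mulrA -exprD subnKC.
Qed.
Lemma pmPX M N x : pm N x -> pm (M + N) (P ^+ M * x).
Proof. by case=> a ha ->; exists a => //; rewrite mulrA -exprD. Qed.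
Lemma pmPXoa M x : x \in OA -> pm M (P ^+ M * x).
Proof. by move=> h; exists x. Qed.
Lemma pm_div N x : pm N.+1 x -> pm N (x / P).
Proof.
case=> a ha ->; exists a => //; rewrite exprS -mulrA [P * _]mulrC -mulrA [P * (a / P)]mulrCA mulfV ?mulr1 //.
exact: P_neq0.
Qed.
Lemma pmS_div N x : pm N.+1 x -> x = P * (x / P).
Proof. by move=> _; rewrite mulrC divfK // P_neq0. Qed.
Lemma pm_sum N (I : Type) (s : seq I) (F : I -> L) :
  (forall i, pm N (F i)) -> pm N (\sum_(i <- s) F i).
Proof. move=> h; apply: (big_ind (pm N)) => //; [exact: pm0 | exact: pmD]. Qed.

Lemma red_ker0 x : x \in OA -> red x = 0 -> pm 1 x.
Proof. by move=> hx h; case: HS => _ _ _ _ _ _ H *; apply/(H _ hx). Qed.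
Lemma red_pm1 x : pm 1 x -> red x = 0.
Proof. move=> h; have hx := pm_oa h. by case: HS => _ _ _ _ _ _ H *; apply/(H _ hx). Qed.
Lemma red_pm1B x y : x \in OA -> y \in OA -> pm 1 (x - y) -> red x = red y.
Proof. by move=> hx hy /red_pm1; rewrite redB // => /eqP; rewrite subr_eq0 => /eqP. Qed.
Lemma redP : red P = 0. Proof. by apply: red_pm1; exists 1; rewrite ?oa1 ?expr1 ?mulr1. Qed.

Lemma teich1 : teich 1 = 1.
Proof.
have h : teich 1 * (teich 1 - 1) = 0 by rewrite mulrBr mulr1 -teichM mulr1 subrr.
move/eqP: h; rewrite mulf_eq0 => /orP [/eqP h|]; last by rewrite subr_eq0 => /eqP.
by have := teichK 1; rewrite h red0 => /eqP; rewrite eq_sym oner_eq0.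
Qed.
Lemma teich0 : teich 0 = 0.
Proof.
have h : teich 0 * (teich 0 - 1) = 0 by rewrite mulrBr mulr1 -teichM mulr0 subrr.
move/eqP: h; rewrite mulf_eq0 => /orP [/eqP //|]; rewrite subr_eq0 => /eqP h.
by have := teichK 0; rewrite h red1 => /eqP; rewrite oner_eq0.
Qed.
Lemma teichX c n : teich (c ^+ n) = teich c ^+ n.
Proof. elim: n => [|n IH]; first by rewrite !expr0 teich1. by rewrite !exprS teichM IH. Qed.

Definition tsum (e : nat -> C) (N : nat) := \sum_(n < N) teich (e n) * P ^+ n.
Definition Dig (e : nat -> C) (x : L) := forall N : nat, pm N (x - tsum e N).
Lemma DigE e x : teich_exp p C L OA teich e x <-> Dig e x.
Proof. by []. Qed.

Lemma tsumS e N : tsum e N.+1 = tsum e N + teich (e N) * P ^+ N.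
Proof. by rewrite /tsum big_ord_recr. Qed.
Lemma tsumSl e N : tsum e N.+1 = teich (e 0%N) + P * tsum (fun i => e i.+1) N.
Proof.
rewrite /tsum big_ord_recl expr0 mulr1 mulr_sumr; congr (_ + _).
by apply: eq_bigr => i _; rewrite exprS mulrCA.
Qed.
Lemma tsum_oa e N : tsum e N \in OA.
Proof. by apply: oa_sum => i; rewrite oaM ?teich_oa ?oaX ?oaP. Qed.

Lemma Dig_oa e x : Dig e x -> x \in OA.
Proof. by move=> /(_ 0%N); rewrite /tsum big_ord0 subr0 => /pm_oa. Qed.
Lemma Dig_red e x : Dig e x -> red x = e 0%N.
Proof.
move=> h; have hx := Dig_oa h; have := h 1%N.
rewrite /tsum big_ord1 expr0 mulr1 => /(red_pm1B hx (teich_oa _)).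
by rewrite teichK.
Qed.
Definition shiftx (e : nat -> C) (x : L) := (x - teich (e 0%N)) / P.
Lemma Dig_shift e x : Dig e x -> Dig (fun i => e i.+1) (shiftx e x).
Proof.
move=> h N; have := h N.+1; rewrite tsumSl => /pm_div.
suff -> : shiftx e x - tsum (fun i : nat => e i.+1) N = (x - (teich (e 0%N) + P * tsum (fun i : nat => e i.+1) N)) / P by [].
by rewrite /shiftx; field; exact: P_neq0.
Qed.
Lemma shiftx_oa e x : Dig e x -> shiftx e x \in OA.
Proof. by move=> /Dig_shift /Dig_oa. Qed.
Lemma shiftxE e x : Dig e x -> x = teich (e 0%N) + P * shiftx e x.
Proof. by move=> _; rewrite /shiftx mulrC divfK ?P_neq0 // subrKC. Qed.

Fixpoint xs (x : L) (n : nat) : L :=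
  if n is n'.+1 then (xs x n' - teich (red (xs x n'))) / P else x.
Lemma xs_oa x n : x \in OA -> xs x n \in OA.
Proof.
move=> hx; elim: n => [|n IH] //=.
have h : pm 1 (xs x n - teich (red (xs x n))).
  by apply: red_ker0; rewrite ?oaB ?teich_oa // redB ?teich_oa // teichK subrr.
case: h => y hy ->; suff -> : P ^+ 1 * y / P = y by [].
by rewrite expr1; field; exact: P_neq0.
Qed.
Lemma Dig_exists x : x \in OA -> Dig (fun n => red (xs x n)) x.
Proof.
move=> hx N; suff -> : x - tsum (fun n => red (xs x n)) N = P ^+ N * xs x N.
  by apply: pmPXoa; apply: xs_oa.
elim: N => [|N IH]; first by rewrite /tsum big_ord0 subr0 expr0 mul1r.
rewrite tsumS opprD addrA IH /= exprS.
by field; exact: P_neq0.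
Qed.

Lemma Dig_uniq k : forall e e' x x', Dig e x -> Dig e' x' -> pm k.+1 (x - x') ->
  forall i, (i <= k)%N -> e i = e' i.
Proof.
elim: k => [|k IH] e e' x x' h h' hk i hi.
  move: hi; rewrite leqn0 => /eqP ->; rewrite -(Dig_red h) -(Dig_red h').
  by apply: red_pm1B; rewrite ?(Dig_oa h) ?(Dig_oa h').
have e0 : e 0%N = e' 0%N.
  rewrite -(Dig_red h) -(Dig_red h'); apply: red_pm1B; rewrite ?(Dig_oa h) ?(Dig_oa h') //.
  exact: (pm_le _ hk).
case: i hi => [|i] hi //.
apply: (IH _ _ _ _ (Dig_shift h) (Dig_shift h')) => //.
have -> : shiftx e x - shiftx e' x' = (x - x') / P.
  by rewrite /shiftx e0 -mulrBl opprB addrA subrK.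
exact: pm_div.
Qed.
Lemma Dig_uniq0 e e' x : Dig e x -> Dig e' x -> e =1 e'.
Proof.
move=> h h' i; apply: (Dig_uniq (k := i) h h') => //.
by rewrite subrr; apply: pm0.
Qed.

Lemma Dig_P e x : Dig e x -> Dig (fun i => if i is j.+1 then e j else 0) (P * x).
Proof.
move=> h [|N]; first by rewrite /tsum big_ord0 subr0; apply: pm0x; rewrite oaM ?oaP ?(Dig_oa h).
rewrite tsumSl teich0 add0r -mulrBr; exact: (pmPX 1 (h N)).
Qed.
Lemma Dig_PX m e x : Dig e x -> Dig (fun i => if (i < m)%N then 0 else e (i - m)%N) (P ^+ m * x).
Proof.
elim: m => [|m IH] h.
  by rewrite expr0 mul1r; move=> N; move: (h N); congr pm; congr (_ - _); apply: eq_bigr => i _; rewrite subn0.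
rewrite exprS -mulrA; move: (Dig_P (IH h)); congr Dig.
by apply: boolp.funext => -[|i] //=.
Qed.
Lemma Dig_teich z e x : Dig e x -> Dig (fun i => z * e i) (teich z * x).
Proof.
move=> h N; have := pmMl (h N) (teich_oa z).
rewrite mulrBr /tsum mulr_sumr; congr (pm _ (_ - _)).
by apply: eq_bigr => i _; rewrite teichM mulrA.
Qed.
Lemma Dig_teich1 w : Dig (fun i => if i == 0%N then w else 0) (teich w).
Proof.
case=> [|N]; first by rewrite /tsum big_ord0 subr0; apply: pm0x; exact: teich_oa.
rewrite tsumSl /= (_ : tsum _ N = 0) ?mulr0 ?addr0 ?subrr; first exact: pm0.
by rewrite /tsum big1 // => i _; rewrite teich0 mul0r.
Qed.
Lemma Dig_pm0 k x : pm k.+1 x -> forall e, Dig e x -> forall i, (i <= k)%N -> e i = 0.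
Proof.
move=> h e he i hi.
have h0 : Dig (fun _ => 0) 0 by move=> N; rewrite /tsum big1 ?subrr; [exact: pm0| move=> j _; rewrite teich0 mul0r].
by apply: (Dig_uniq he h0 _ hi); rewrite subr0.
Qed.
Lemma Dig_trunc k e x : Dig e x -> pm k.+1 (x - tsum e k.+1).
Proof. by move=> h; apply: h. Qed.

Lemma vT_inf x : vT x = (+oo)%E <-> x = 0. Proof. by case: Hval => H _; apply: H. Qed.
Lemma vT0 : vT 0 = (+oo)%E. Proof. by apply/vT_inf. Qed.
Lemma vT_ny x : vT x != (-oo)%E. Proof. by case: Hval => _ [H _]; apply: H. Qed.
Lemma vTM x y : vT (x * y) = (vT x + vT y)%E. Proof. by case: Hval => _ [_ [H _]]; apply: H. Qed.
Lemma vTD x y b : (b <= vT x)%E -> (b <= vT y)%E -> (b <= vT (x + y))%E.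
Proof.
case: Hval => _ [_ [_ H]] hx hy; apply: le_trans (H x y).
by rewrite le_min hx hy.
Qed.
Lemma vT_fin x : x != 0 -> vT x = (fine (vT x))%:E.
Proof.
move=> hx; have := vT_ny x; case E : (vT x) => [a| |] //= _.
by move/vT_inf: E => /eqP; rewrite (negbTE hx).
Qed.
Lemma vT1 : vT 1 = 0%E.
Proof.
have := vTM 1 1; rewrite mulr1 (vT_fin (oner_neq0 C)) -EFinD => /eqP; rewrite eqe => /eqP h.
by congr (_%:E); move: h; rewrite -{1}[fine _]addr0 => /addrI <-.
Qed.
Lemma vTN1 : vT (-1) = 0%E.
Proof.
have hn : (-1 : C) != 0 by rewrite oppr_eq0 oner_neq0.
have := vTM (-1) (-1); rewrite mulrNN mulr1 vT1 (vT_fin hn) -EFinD => /eqP; rewrite eqe => /eqP h.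
congr (_%:E); apply/eqP.
have : fine (vT (-1)) *+ 2 == 0 by rewrite mulr2n -h.
by rewrite mulrn_eq0.
Qed.
Lemma vTN x : vT (- x) = vT x.
Proof. by rewrite -mulN1r vTM vTN1 add0e. Qed.
Lemma vTX x n : x != 0 -> vT (x ^+ n) = (n%:R * fine (vT x))%:E.
Proof.
move=> hx; elim: n => [|n IH]; first by rewrite expr0 vT1 mul0r.
by rewrite exprS vTM IH (vT_fin hx) -EFinD /= -addn1 natrD mulrDl mul1r addrC.
Qed.
Lemma ecancel (a : R) (u : \bar R) : (a%:E <= a%:E + u)%E -> (0 <= u)%E.
Proof. by case: u => [s| |] //=; rewrite -EFinD lee_fin lerDl. Qed.

Definition Oc : pred C := fun c => (0 <= vT c)%E.
Lemma Oc1 : 1 \in Oc. Proof. by rewrite /in_mem /= /Oc vT1. Qed.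
Lemma OcB a b : a \in Oc -> b \in Oc -> a - b \in Oc.
Proof. by rewrite /in_mem /= /Oc => ha hb; apply: vTD; rewrite ?vTN. Qed.
Lemma OcM a b : a \in Oc -> b \in Oc -> a * b \in Oc.
Proof. by rewrite /in_mem /= /Oc => ha hb; rewrite vTM adde_ge0. Qed.
Lemma Ocroot a : a \in Oc -> exists2 b, b \in Oc & b ^+ p = a.
Proof.
move=> ha; have [b hb] := @solve_monicpoly C p (fun i => if i == 0%N then a else 0) (prime_gt0 Hp).
have hba : b ^+ p = a.
  rewrite hb; case: p Hp => [//|q] _; rewrite big_ord_recl /= expr0 mulr1 big1 ?addr0 //.
  by move=> i _; rewrite mul0r.
exists b => //; move: ha; rewrite /in_mem /= /Oc -hba.
have [->|hb0] := eqVneq b 0; first by rewrite vT0.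
rewrite vTX // (vT_fin hb0) !lee_fin /=.
by rewrite pmulr_rge0 // ltr0n prime_gt0.
Qed.

Inductive R0 : L -> Prop :=
| R0t c : c \in Oc -> R0 (teich c)
| R0one : R0 1
| R0s x y : R0 x -> R0 y -> R0 (x - y)
| R0m x y : R0 x -> R0 y -> R0 (x * y).

Lemma R0_oa x : R0 x -> x \in OA.
Proof. elim=> *; by [exact: teich_oa | exact: oa1 | exact: oaB | exact: oaM]. Qed.
Lemma R0_red x : R0 x -> red x \in Oc.
Proof.
elim=> [c hc|||].
- by rewrite teichK.
- by rewrite red1; exact: Oc1.
- by move=> a b ha ha' hb hb'; rewrite redB ?R0_oa // OcB.
- by move=> a b ha ha' hb hb'; rewrite redM ?R0_oa // OcM.
Qed.
Lemma R00 : R0 0. Proof. by rewrite -(subrr 1); apply: R0s; apply: R0one. Qed.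
Lemma R0N x : R0 x -> R0 (- x). Proof. by move=> h; rewrite -sub0r; apply: R0s => //; apply: R00. Qed.
Lemma R0D x y : R0 x -> R0 y -> R0 (x + y).
Proof. by move=> hx hy; rewrite -[y]opprK; apply: R0s => //; apply: R0N. Qed.
Lemma R0n n : R0 n%:R.
Proof. elim: n => [|n IH]; first exact: R00. by rewrite -addn1 natrD; apply: R0D => //; apply: R0one. Qed.
Lemma R0X x n : R0 x -> R0 (x ^+ n).
Proof. move=> h; elim: n => [|n IH]; first by rewrite expr0; apply: R0one. by rewrite exprS; apply: R0m. Qed.
Lemma R0Mn x n : R0 x -> R0 (x *+ n).
Proof. by move=> h; rewrite -mulr_natr; apply: R0m => //; apply: R0n. Qed.
Lemma R0_sum (I : Type) (s : seq I) (F : I -> L) :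
  (forall i, R0 (F i)) -> R0 (\sum_(i <- s) F i).
Proof. move=> h; apply: (big_ind R0) => //; [exact: R00 | exact: R0D]. Qed.
Lemma R0_sumP (I : Type) (s : seq I) (F : I -> L) (Q : pred I) :
  (forall i, Q i -> R0 (F i)) -> R0 (\sum_(i <- s | Q i) F i).
Proof. move=> h; apply: (big_ind R0) => //; [exact: R00 | exact: R0D]. Qed.

Lemma p_gt1 : (1 < p)%N. Proof. exact: prime_gt1. Qed.

Lemma binom_gen n a b : prime n -> R0 a -> R0 b ->
  exists2 c, R0 c & (a + b) ^+ n = a ^+ n + b ^+ n + n%:R * c.
Proof.
case: n => [//|n] hn ha hb; rewrite exprDn.
rewrite big_ord_recr big_ord_recl /= subn0 subnn bin0 binn !mulr1n expr0 mulr1 mul1r.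
exists (\sum_(i < n) a ^+ (n.+1 - bump 0 i) * b ^+ bump 0 i *+ ('C(n.+1, bump 0 i) %/ n.+1)).
  by apply: R0_sum => i; apply: R0Mn; apply: R0m; apply: R0X.
rewrite mulr_sumr -[LHS]addrA [X in _ + X = _]addrC addrA; congr (_ + _).
apply: eq_bigr => i _; rewrite mulr_natl -mulrnA; congr (_ *+ _).
rewrite divnK //; apply: prime_dvd_bin => //=.
by case: i => /= i hi; rewrite /bump /= add1n ltnS.
Qed.
Lemma binom a b : R0 a -> R0 b -> exists2 c, R0 c & (a + b) ^+ p = a ^+ p + b ^+ p + P * c.
Proof. exact: binom_gen. Qed.
Lemma negp b : R0 b -> exists2 c, R0 c & (- b) ^+ p = - b ^+ p + P * c.
Proof.
move=> hb; case: (even_prime Hp) => [hp2|hodd].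
  exists (b ^+ 2); first exact: R0X.
  by rewrite hp2 sqrrN mulr_natl mulr2n addKr.
by exists 0; rewrite ?mulr0 ?addr0; [apply: R00|rewrite exprNn -signr_odd hodd expr1 mulN1r].
Qed.

Lemma frob_dec x : R0 x -> exists s, exists r, [/\ R0 s, R0 r & x = s ^+ p + P * r].
Proof.
elim=> [c hc|| a b _ [s [r [hs hr ->]]] _ [s' [r' [hs' hr' ->]]] | a b _ [s [r [hs hr ->]]] _ [s' [r' [hs' hr' ->]]]].
- case: (Ocroot hc) => b hb hbp; exists (teich b), 0; split; [exact: R0t|exact: R00|].
  by rewrite mulr0 addr0 -teichX hbp.
- exists 1, 0; split; [exact: R0one|exact: R00|]; by rewrite expr1n mulr0 addr0.
- have hs'N := R0N hs'; case: (negp hs') => c hc hcE.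
  case: (binom hs hs'N) => c' hc' hc'E.
  exists (s - s'), (r - r' - c - c'); split; [exact: R0s | by repeat apply: R0s | ].
  rewrite hc'E hcE; ring.
- exists (s * s'), (s ^+ p * r' + r * s' ^+ p + P * r * r'); split; [exact: R0m| |].
    by repeat (apply: R0D || apply: R0m || apply: R0X || apply: R0n).
  by rewrite exprMn; ring.
Qed.

Lemma redX x n : x \in OA -> red (x ^+ n) = red x ^+ n.
Proof. move=> hx; elim: n => [|n IH]; first by rewrite !expr0 red1. by rewrite !exprS redM ?oaX // IH. Qed.

Lemma R0_step k x : R0 x -> exists a, exists t,
  [/\ R0 a, t \in OA & x - teich (red x) = P * a + P ^+ k.+1 * t].
Proof.
elim: k x => [|k IH] x hx.
  have : pm 1 (x - teich (red x)).
    have hxo := R0_oa hx.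
    apply: red_ker0; first by rewrite oaB ?teich_oa.
    by rewrite redB ?teich_oa // teichK subrr.
  case=> t ht ->; exists 0, t; split => //; [exact: R00 | by rewrite mulr0 add0r].
case: (frob_dec hx) => s [r [hs hr ->]].
case: (IH s hs) => a [t [ha ht hE]].
set q := teich (red s).
have hq : R0 q by apply: R0t; apply: R0_red.
have hd : R0 (s - q) by apply: R0s.
case: (binom hq hd) => c hc; rewrite addrC subrK => hc'.
have hsoa := R0_oa hs; have hroa := R0_oa hr.
have -> : red (s ^+ p + P * r) = red s ^+ p.
  by rewrite redD ?oaX ?oaM ?oaP // redM ?oaP // redP mul0r addr0 redX.
rewrite teichX -/q hc'.
have hp2 : (2 <= p)%N := p_gt1.
have -> : (s - q) ^+ p = (s - q) ^+ (p - 2) * (s - q) ^+ 2 by rewrite -exprD subnK.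
have hd2 : (s - q) ^+ 2 = P * (P * a ^+ 2) + P ^+ k.+2 * (2%:R * a * t + P ^+ k * t ^+ 2).
  by rewrite hE !exprS; ring.
rewrite hd2.
exists (c + r + (s - q) ^+ (p - 2) * (P * a ^+ 2)),
  ((s - q) ^+ (p - 2) * (2%:R * a * t + P ^+ k * t ^+ 2)); split.
- by repeat (assumption || apply: R0D || apply: R0m || apply: R0X || apply: R0n).
- have hdo := R0_oa hd; have hao := R0_oa ha.
  by repeat (assumption || apply: oa1 || apply: oaD || apply: oaM || apply: oaX || apply: oan || apply: oaP).
ring.
Qed.

Definition R0bar x := forall k, exists2 y, R0 y & pm k (x - y).

Lemma R0bar_dig i : forall x e, R0bar x -> Dig e x -> e i \in Oc.
Proof.
elim: i => [|i IH] x e hx he.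
  rewrite -(Dig_red he); case: (hx 1%N) => y hy h1.
  by rewrite (red_pm1B (Dig_oa he) (R0_oa hy) h1); apply: R0_red.
apply: (IH (shiftx e x) (fun i => e i.+1)) (Dig_shift he) => k.
case: (hx k.+1) => y hy hk.
case: (R0_step k hy) => a [t [ha ht hE]].
have hred : red y = e 0%N.
  by rewrite -(Dig_red he); apply: esym; apply: red_pm1B; rewrite ?(Dig_oa he) ?R0_oa //; apply: (pm_le _ hk).
exists a => //.
have -> : shiftx e x - a = ((x - y) + P ^+ k.+1 * t) / P.
  rewrite /shiftx -hred.
  have -> : teich (red y) = y - (P * a + P ^+ k.+1 * t) by rewrite -hE opprB addrC subrK.
  by field; exact: P_neq0.
by apply: pm_div; apply: pmD => //; apply: pmPXoa.
Qed.

Lemma R0_dig x e : R0 x -> Dig e x -> forall i, e i \in Oc.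
Proof. move=> hx he i; apply: (@R0bar_dig i x e) => // k; exists x => //; rewrite subrr; apply: pm0. Qed.


Definition ModZ k z x := exists r, exists t, [/\ R0 r, t \in OA & x = teich z * r + P ^+ k.+1 * t].
Definition MA k (b : \bar R) x := exists2 z, (b <= vT z)%E & ModZ k z x.
Definition LB k (b : \bar R) x := forall e, Dig e x -> forall i, (i <= k)%N -> (b <= vT (e i))%E.

Ltac oat := repeat first [assumption | apply: teich_oa | apply: oaP | apply: oan | apply: oa1 | apply: oa0 | apply: oaD | apply: oaN | apply: oaM | apply: oaX | apply: tsum_oa | apply: R0_oa].
Lemma ModZ_oa k z x : ModZ k z x -> x \in OA.
Proof. by case=> r [t [hr ht ->]]; oat. Qed.
Lemma MA_oa k b x : MA k b x -> x \in OA.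
Proof. by case=> z _ /ModZ_oa. Qed.

Lemma ModZ_weak k z1 z2 x : (vT z1 <= vT z2)%E -> ModZ k z2 x -> ModZ k z1 x.
Proof.
move=> hle [r [t [hr ht ->]]].
have [ez1|hz1] := eqVneq z1 0.
  move: hle; rewrite ez1 vT0 leye_eq => /eqP /vT_inf ->.
  by exists r, t; split.
exists (teich (z2 / z1) * r), t; split => //.
  apply: R0m => //; apply: R0t; rewrite /in_mem /= /Oc.
  apply: (@ecancel (fine (vT z1))); rewrite -(vT_fin hz1) -vTM [z1 * _]mulrC divfK //.
by rewrite mulrA -teichM [z1 * _]mulrC divfK.
Qed.

Lemma MA_0 k b x : pm k.+1 x -> MA k b x.
Proof.
case=> t ht ->; exists 0; first by rewrite vT0 leey.
by exists 0, t; split => //; [exact: R00 | rewrite mulr0 add0r].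
Qed.
Lemma MA_weak k b b' x : (b' <= b)%E -> MA k b x -> MA k b' x.
Proof. by move=> h [z hz m]; exists z => //; apply: le_trans hz. Qed.
Lemma MA_D k b x y : MA k b x -> MA k b y -> MA k b (x + y).
Proof.
case=> z1 h1 m1 [z2 h2 m2].
have [le12|lt21] := leP (vT z1) (vT z2).
  exists z1 => //; move: (ModZ_weak le12 m2) m1 => [r2 [t2 [hr2 ht2 ->]]] [r1 [t1 [hr1 ht1 ->]]].
  exists (r1 + r2), (t1 + t2); split; [exact: R0D | exact: oaD | ring].
exists z2 => //; move: (ModZ_weak (ltW lt21) m1) m2 => [r1 [t1 [hr1 ht1 ->]]] [r2 [t2 [hr2 ht2 ->]]].
exists (r1 + r2), (t1 + t2); split; [exact: R0D | exact: oaD | ring].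
Qed.
Lemma MA_big k b (I : Type) (s : seq I) (Q : pred I) (F : I -> L) :
  (forall i, Q i -> MA k b (F i)) -> MA k b (\sum_(i <- s | Q i) F i).
Proof. move=> h; apply: (big_ind (MA k b)) => //; [apply: MA_0; exact: pm0 | exact: MA_D]. Qed.
Lemma MA_M k b1 b2 x y : MA k b1 x -> MA k b2 y -> MA k (b1 + b2)%E (x * y).
Proof.
case=> z1 h1 [r1 [t1 [hr1 ht1 ->]]] [z2 h2 [r2 [t2 [hr2 ht2 ->]]]].
exists (z1 * z2); first by rewrite vTM leeD.
exists (r1 * r2), (t1 * (teich z2 * r2 + P ^+ k.+1 * t2) + teich z1 * r1 * t2); split.
- exact: R0m.
- by oat.
- by rewrite teichM; ring.
Qed.
Lemma MA_R0 k b r x : R0 r -> MA k b x -> MA k b (r * x).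
Proof.
move=> hr [z hz [r1 [t1 [hr1 ht1 ->]]]]; exists z => //.
exists (r * r1), (r * t1); split; [exact: R0m | by oat | ring].
Qed.
Lemma MA_PX k m b x : MA k b x -> MA (m + k) b (P ^+ m * x).
Proof.
case=> z hz [r [t [hr ht ->]]]; exists z => //.
exists (P ^+ m * r), t; split => //; first by apply: R0m => //; apply: R0X; apply: R0n.
by rewrite -addnS exprD; ring.
Qed.
Lemma MA_le k k' b x : (k' <= k)%N -> MA k b x -> MA k' b x.
Proof.
move=> hk [z hz [r [t [hr ht ->]]]]; exists z => //.
exists r, (P ^+ (k - k') * t); split => //; first by oat.
by rewrite mulrA -exprD addSn subnKC.
Qed.

Lemma MA_LB k b x : MA k b x -> LB k b x.
Proof.
move=> [z hz [r [t [hr ht ->]]]] e he i hi.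
have hro := R0_oa hr.
have her := Dig_exists hro.
have hd := Dig_teich z her.
have hpm : pm k.+1 (teich z * r + P ^+ k.+1 * t - teich z * r).
  by rewrite addrAC subrr add0r; apply: pmPXoa.
rewrite (Dig_uniq he hd hpm hi) vTM addeC; apply: lee_paddl => //.
exact: (R0_dig hr her).
Qed.

Lemma LB_MA k b x e : Dig e x -> (forall i, (i <= k)%N -> (b <= vT (e i))%E) -> MA k b x.
Proof.
move=> he hb; rewrite -(subrK (tsum e k.+1) x); apply: MA_D.
  by apply: MA_0; apply: Dig_trunc.
rewrite /tsum; apply: MA_big => i _; exists (e i); first by apply: hb; rewrite -ltnS.
by exists (P ^+ i), 0; split; [apply: R0X; apply: R0n | exact: oa0 | rewrite mulr0 addr0].
Qed.

Lemma MA_prod k x y ex ey b : Dig ex x -> Dig ey y ->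
  (forall a c, (a + c <= k)%N -> (b <= vT (ex a) + vT (ey c))%E) -> MA k b (x * y).
Proof.
move=> hx hy hb.
have hxo := Dig_oa hx; have hyo := Dig_oa hy.
have -> : x * y = tsum ex k.+1 * tsum ey k.+1 + ((x - tsum ex k.+1) * y + tsum ex k.+1 * (y - tsum ey k.+1)) by ring.
apply: MA_D; last first.
  apply: MA_0; apply: pmD; first by apply: pmMr => //; apply: Dig_trunc.
  by apply: pmMl; [apply: Dig_trunc | apply: tsum_oa].
rewrite /tsum mulr_suml; apply: MA_big => a _; rewrite mulr_sumr; apply: MA_big => c _.
have -> : teich (ex a) * P ^+ a * (teich (ey c) * P ^+ c) = teich (ex a * ey c) * P ^+ (a + c).
  by rewrite teichM exprD; ring.
case: (leqP (a + c) k) => hac.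
  exists (ex a * ey c); first by rewrite vTM; apply: hb.
  by exists (P ^+ (a + c)), 0; split; [apply: R0X; apply: R0n | exact: oa0 | rewrite mulr0 addr0].
by apply: MA_0; rewrite -(subnK hac) exprD mulrA mulrC; apply: pmPXoa; oat.
Qed.


Lemma MA_one k b : (b <= 0)%E -> MA k b 1.
Proof.
move=> hb; exists 1; first by rewrite vT1.
by exists 1, 0; split; [exact: R0one | exact: oa0 | rewrite teich1 mulr1 mulr0 addr0].
Qed.

Lemma MA_tprod k ex ey N1 N2 b :
  (forall a c, (a < N1)%N -> (c < N2)%N -> (a + c <= k)%N -> (b <= vT (ex a) + vT (ey c))%E) ->
  MA k b (tsum ex N1 * tsum ey N2).
Proof.
move=> hb; rewrite /tsum mulr_suml; apply: MA_big => a _; rewrite mulr_sumr; apply: MA_big => c _.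
have -> : teich (ex a) * P ^+ a * (teich (ey c) * P ^+ c) = teich (ex a * ey c) * P ^+ (a + c).
  by rewrite teichM exprD; ring.
case: (leqP (a + c) k) => hac.
  exists (ex a * ey c); first by rewrite vTM; apply: hb.
  by exists (P ^+ (a + c)), 0; split; [apply: R0X; apply: R0n | exact: oa0 | rewrite mulr0 addr0].
by apply: MA_0; rewrite -(subnK hac) exprD mulrA mulrC; apply: pmPXoa; oat.
Qed.

Lemma inv_oa x : x \in OA -> red x != 0 -> x^-1 \in OA.
Proof.
move=> hx hr.
have hx0 : x != 0 by apply: contraNneq hr => ->; rewrite red0.
have [m hm] : exists m : nat, P ^+ m * x^-1 \in OA by case: HS.
elim: m hm => [|m IH] hm; first by rewrite expr0 mul1r in hm.
apply: IH.
have h1 : red (x * (P ^+ m.+1 * x^-1)) = 0.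
  by rewrite mulrCA divff // mulr1 redX ?oaP // redP expr0n.
rewrite redM // in h1; move/eqP: h1; rewrite mulf_eq0 (negbTE hr) /= => /eqP h1.
case: (red_ker0 hm h1) => z hz.
rewrite exprS -mulrA expr1 => /(mulfI P_neq0) ->; exact: hz.
Qed.

Lemma lee_pair (x y : \bar R) (s t u : R) : (s%:E <= x)%E -> (t%:E <= y)%E -> u <= s + t -> (u%:E <= x + y)%E.
Proof. by move=> hx hy hu; apply: le_trans (leeD hx hy); rewrite -EFinD lee_fin. Qed.

Lemma Dig_Pteich c w : Dig (fun i => if (i < c)%N then 0 else if (i - c == 0)%N then w else 0) (P ^+ c * teich w).
Proof. exact: Dig_PX (Dig_teich1 w). Qed.


Definition goodPhi (Phi : nat -> R) := [/\ Phi 0%N = 0, (forall c, 0 <= Phi c),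
  (forall a c, (a <= c)%N -> Phi a <= Phi c) &
  (forall a b c, (0 < a)%N -> (0 < b)%N -> (a + b <= c)%N -> Phi a + Phi b + 1 <= Phi c)].
Definition Psi (Phi : nat -> R) (c : nat) : R := if c == 0%N then 0 else Phi c + 1.

Lemma Psi_ge0 Phi : goodPhi Phi -> forall c, 0 <= Psi Phi c.
Proof. case=> _ hge _ _ c; rewrite /Psi; case: eqP => _ //; have := hge c; lra. Qed.
Lemma Psi_mono Phi : goodPhi Phi -> forall a c, (a <= c)%N -> Psi Phi a <= Psi Phi c.
Proof.
move=> hP a c hac; have hc0 := Psi_ge0 hP c; case: hP => _ _ hm _.
rewrite /Psi in hc0 *; have [a0|a0] := eqVneq a 0%N; first exact: hc0.
have c0 : c != 0%N by rewrite -lt0n; apply: leq_trans hac; rewrite lt0n.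
rewrite ?(negbTE a0) (negbTE c0); have := hm _ _ hac; lra.
Qed.
Lemma Psi_sup Phi : goodPhi Phi -> forall a b c, (a + b <= c)%N -> Psi Phi a + Psi Phi b <= Psi Phi c.
Proof.
move=> hP a b c habc.
have hm := Psi_mono hP.
case: (posnP a) => [a0|apos].
  rewrite a0 {1}/Psi eqxx add0r; apply: hm; by rewrite a0 in habc.
case: (posnP b) => [b0|bpos].
  rewrite b0 {2}/Psi eqxx addr0; apply: hm; rewrite b0 addn0 in habc; done.
have cpos : (0 < c)%N by apply: leq_trans habc; rewrite addn_gt0 apos.
rewrite /Psi !gtn_eqF //; case: hP => _ _ _ h; have := h _ _ _ apos bpos habc; lra.
Qed.

Lemma stepB (Q : nat -> R) v d n (hv : Dig d v) (hQge : forall c, 0 <= Q c)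
  (hQsup : forall a b c, (a + b <= c)%N -> (c <= n)%N -> Q a + Q b <= Q c)
  (hd : forall c, (c <= n)%N -> ((- Q c)%:E <= vT (d c))%E) :
  forall m c, (c <= n)%N -> MA c (- Q c)%:E (v ^+ m).
Proof.
have hvo := Dig_oa hv.
elim=> [|m IHm] c hc.
  by rewrite expr0; apply: MA_one; rewrite lee_fin oppr_le0.
rewrite exprSr; have hex := Dig_exists (oaX m hvo).
apply: (MA_prod hex hv) => a b hab.
have ha : (a <= n)%N by apply: leq_trans hc; apply: leq_trans hab; apply: leq_addr.
have hb : (b <= n)%N by apply: leq_trans hc; apply: leq_trans hab; apply: leq_addl.
apply: (lee_pair (MA_LB (IHm a ha) hex (leqnn a)) (hd b hb)).
have := hQsup _ _ _ hab hc; lra.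
Qed.

Lemma stepD Phi (hP : goodPhi Phi) v n' z (hz : Dig z v^-1)
  (hC : forall c, (c <= n')%N -> ((-1 - Psi Phi c)%:E <= vT (z c))%E) :
  forall (M : nat) c, (c <= n')%N -> MA c (- (M%:R) - Psi Phi c)%:E (v^-1 ^+ M).
Proof.
have hvio := Dig_oa hz.
elim=> [|M IHM] c hc.
  by rewrite expr0; apply: MA_one; rewrite lee_fin; have := Psi_ge0 hP c; lra.
rewrite exprSr; have hex := Dig_exists (oaX M hvio).
apply: (MA_prod hex hz) => a b hab.
have ha : (a <= n')%N by apply: leq_trans hc; apply: leq_trans hab; apply: leq_addr.
have hb : (b <= n')%N by apply: leq_trans hc; apply: leq_trans hab; apply: leq_addl.
apply: (lee_pair (MA_LB (IHM a ha) hex (leqnn a)) (hC b hb)).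
have := Psi_sup hP hab; rewrite -addn1 natrD; lra.
Qed.

Lemma stepC Phi (hP : goodPhi Phi) v d n' z (hv : Dig d v) (hd0 : vT (d 0%N) = 1%:E)
  (IH : forall c, (0 < c)%N -> (c <= n')%N -> ((- Phi c)%:E <= vT (d c))%E)
  (hv0 : v != 0) (hz : Dig z v^-1) :
  forall c, (c <= n')%N -> ((-1 - Psi Phi c)%:E <= vT (z c))%E.
Proof.
have hvo := Dig_oa hv; have hvio := Dig_oa hz.
elim/ltn_ind => c IHc hc.
case: c IHc hc => [|c] IHc hc.
  have h := Dig_red hz; have h' := Dig_red hv.
  have : vT (d 0%N * z 0%N) = 0%E by rewrite -h -h' -redM // mulfV // red1 vT1.
  rewrite vTM hd0 /Psi eqxx subr0; case: (vT (z 0%N)) => [s| |] //=.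
  by move=> /eqP; rewrite -EFinD eqe => /eqP h1; rewrite lee_fin; lra.
set cc := c.+1.
set Z' := tsum z cc; set V := tsum d cc.+1; set W := tsum (fun i => d i.+1) cc.
have ht1 := Dig_trunc cc hz; have ht2 := Dig_trunc cc hv.
have hX : pm cc.+1 (P ^+ cc * teich (z cc * d 0%N) - (1 - Z' * V)).
  have -> : P ^+ cc * teich (z cc * d 0%N) - (1 - Z' * V) =
     - (teich (z cc) * (P ^+ cc.+1 * W)) - (Z' + teich (z cc) * P ^+ cc) * (v - V)
     - (v^-1 - tsum z cc.+1) * v.
    rewrite tsumS -/Z' /V tsumSl -/W teichM -[1](mulVf hv0).
    move: (v^-1) => vi; rewrite exprS; ring.
  apply: pmB; first apply: pmB.
  - by apply: pmN; apply: pmMl; [apply: pmPXoa; rewrite /W; oat | oat].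
  - by apply: pmMl => //; rewrite /Z'; oat.
  - by apply: pmMr.
have hma : MA cc (- Psi Phi cc)%:E (P ^+ cc * teich (z cc * d 0%N)).
  rewrite -(subrK (1 - Z' * V) (P ^+ cc * teich _)); apply: MA_D; first exact: MA_0 hX.
  rewrite -[- (Z' * V)]mulN1r; apply: MA_D.
    by apply: MA_one; rewrite lee_fin oppr_le0; apply: Psi_ge0.
  apply: MA_R0; first by apply: R0N; apply: R0one.
  apply: MA_tprod => a b ha hb hab.
  have hza := IHc a ha (leq_trans (ltnW ha) hc).
  case: (posnP b) => [b0|bpos].
    rewrite b0 hd0; apply: (lee_pair hza (lexx _)).
    have := Psi_mono hP (ltnW ha); lra.
  have hdb := IH b bpos (leq_trans (hb : (b <= cc)%N) hc).
  apply: (lee_pair hza hdb).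
  rewrite {1}/Psi /cc /=.
  case: hP => _ hge hm h1.
  case: (posnP a) => [a0|apos].
    rewrite a0 /Psi eqxx; have := hm b c.+1 (leq_trans (leqnn _) hb); lra.
  rewrite /Psi gtn_eqF //; have := h1 _ _ _ apos bpos hab; lra.
have := MA_LB hma (Dig_Pteich cc (z cc * d 0%N)) (leqnn cc).
rewrite ltnn subnn eqxx vTM hd0; case: (vT (z cc)) => [s| |] //=.
  by rewrite -EFinD !lee_fin; lra.
by move=> _; rewrite leey.
Qed.


Lemma Phi_sup0 Phi : goodPhi Phi -> forall a b c, (a + b <= c)%N -> Phi a + Phi b <= Phi c.
Proof.
case=> h0 hge hm h1 a b c habc.
case: (posnP a) => [a0|apos].
  by rewrite a0 h0 add0r; apply: hm; rewrite a0 in habc.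
case: (posnP b) => [b0|bpos].
  by rewrite b0 h0 addr0; apply: hm; rewrite b0 addn0 in habc.
by have := h1 _ _ _ apos bpos habc; lra.
Qed.

Lemma main_bound (v : L) (d : nat -> C) (a : int -> L) (y : L) (lam K : R)
  (hv : Dig d v) (hd0 : vT (d 0%N) = 1%:E)
  (hb : forall m, exists2 b, (forall j, MA j 0%E b) & a m = (if m == p%:Z then 1 else 0) + P * b)
  (hlam : 1 < lam) (hK : 0 < K)
  (hdec : forall (M n : nat), K * lam ^+ n < M%:R -> pm n.+1 (a (- M%:Z)))
  (hy : forall (n : nat) (be : R), exists N : nat,
     MA n be%:E (y - \sum_(i < N.*2.+1) a (i%:Z - N%:Z) * v ^ (i%:Z - N%:Z)))
  (hyd : Dig (fun i => d i ^+ p) y) :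
  exists2 A : R, 0 < A & forall n, ((- (A * lam ^+ n))%:E <= vT (d n))%E.
Proof.
have hvo := Dig_oa hv.
have hd00 : d 0%N != 0 by apply/eqP => h; move: hd0; rewrite h vT0.
have hredv : red v != 0 by rewrite (Dig_red hv).
have hv0 : v != 0 by apply/eqP => h; move: hredv; rewrite h red0 eqxx.
have hvio := inv_oa hvo hredv.
have hz := Dig_exists hvio.
have hl1 : 0 < lam - 1 by lra.
have hl2 : 0 < (lam - 1) ^+ 2 by rewrite exprn_gt0.
pose A := (K + 1) * lam / (lam - 1) + 1 / (lam - 1) ^+ 2.
have hA2 : (K + 1) * lam <= A * (lam - 1).
  have -> : A * (lam - 1) = (K + 1) * lam + 1 / (lam - 1).
    by rewrite /A; field; rewrite gt_eqF.
  have : 0 <= 1 / (lam - 1) by rewrite divr_ge0 // ltW.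
  lra.
have hA1 : 1 <= A * (lam - 1) ^+ 2.
  have -> : A * (lam - 1) ^+ 2 = (K + 1) * lam * (lam - 1) + 1.
    by rewrite /A; field; rewrite gt_eqF.
  have : 0 <= (K + 1) * lam * (lam - 1) by rewrite !mulr_ge0 // ltW //; lra.
  lra.
have hA0 : 0 < A.
  rewrite /A addr_gt0 // ?divr_gt0 //; rewrite mulr_gt0 //; lra.
have hAK : K < A.
  rewrite ltNge; apply/negP => hKA.
  have : A * (lam - 1) <= K * (lam - 1) by rewrite ler_wpM2r // ltW.
  nra.
have hpow1 n : 1 <= lam ^+ n by rewrite exprn_ege1 // ltW.
have hpow_mono a' c' : (a' <= c')%N -> lam ^+ a' <= lam ^+ c'.
  move=> h; rewrite -(subnKC h) exprD -{1}[lam ^+ a']mulr1; apply: ler_wpM2l; last exact: hpow1.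
  by apply: le_trans (hpow1 a'); rewrite ler01.
have hpowS n : (0 < n)%N -> lam <= lam ^+ n.
  by move=> h; rewrite -{1}[lam]expr1; apply: hpow_mono.
pose Phi n := A * (lam ^+ n - 1).
have hgood : goodPhi Phi.
  split.
  - by rewrite /Phi expr0 subrr mulr0.
  - by move=> c; rewrite /Phi; apply: mulr_ge0; [exact: ltW | rewrite subr_ge0].
  - move=> a' c' h; rewrite /Phi; apply: ler_wpM2l; [exact: ltW | have := hpow_mono _ _ h; lra].
  - move=> a' b' c' ha hb' habc.
    have hx := hpowS _ ha; have hy' := hpowS _ hb'.
    have hxy : lam ^+ (a' + b') <= lam ^+ c' by apply: hpow_mono.
    rewrite exprD in hxy.
    have h1 : (lam - 1) ^+ 2 <= (lam ^+ a' - 1) * (lam ^+ b' - 1).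
      by rewrite expr2; apply: ler_pM; lra.
    have h2 : A * (lam - 1) ^+ 2 <= A * ((lam ^+ a' - 1) * (lam ^+ b' - 1)) by rewrite ler_wpM2l // ltW.
    have h3 : A * (lam ^+ a' * lam ^+ b') <= A * lam ^+ c' by rewrite ler_wpM2l // ltW.
    rewrite /Phi; nra.
have hPhi00 : Phi 0%N = 0 by case: hgood.
have hp2 : 2%:R <= p%:R :> R by rewrite ler_nat; apply: prime_gt1.
have hneg : forall n M : nat, M%:R <= K * lam ^+ n.+1 -> M%:R + Phi n + 1 <= p%:R * Phi n.+1.
  move=> n M hM.
  have hmu := hpowS n.+1 isT.
  have hnu : lam ^+ n <= lam ^+ n.+1 by apply: hpow_mono.
  have hprod : 0 <= (A - K) * (lam ^+ n.+1 - lam) by rewrite mulr_ge0 //; lra.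
  have hPhi0 : 0 <= Phi n.+1 by case: hgood => _ h _ _; apply: h.
  have hpP : 2%:R * Phi n.+1 <= p%:R * Phi n.+1 by rewrite ler_wpM2r.
  have hPn : Phi n <= Phi n.+1 by case: hgood => _ _ hm _; apply: hm.
  rewrite /Phi in hPn hPhi0 hpP *.
  nra.
have key : forall n, (forall c, (c < n)%N -> ((- Phi c)%:E <= vT (d c))%E) -> ((- Phi n)%:E <= vT (d n))%E.
  case=> [|n'] IH.
    by rewrite hd0 /Phi expr0 subrr mulr0 oppr0 lee_fin ler01.
  set n := n'.+1.
  have IH' : forall c, (0 < c)%N -> (c <= n')%N -> ((- Phi c)%:E <= vT (d c))%E.
    by move=> c _ hc; apply: IH; rewrite ltnS.
  have hC := stepC hgood hv hd0 IH' hv0 hz.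
  have hD := stepD hgood hz hC.
  rewrite leNgt; apply/negP => hlt.
  have hdn0 : d n != 0 by apply/eqP => h; move: hlt; rewrite h vT0.
  have hfin := vT_fin hdn0.
  set del := fine (vT (d n)) in hfin.
  rewrite hfin lte_fin in hlt.
  have hPhin0 : 0 <= Phi n by case: hgood => _ h _ _; apply: h.
  pose Q c := if c == n then - del else Phi c.
  have hQge : forall c, 0 <= Q c.
    by move=> c; rewrite /Q; case: eqP => _; [lra | case: hgood => _ h _ _; apply: h].
  have hsup0 := Phi_sup0 hgood.
  have hQsup : forall a' b' c, (a' + b' <= c)%N -> (c <= n)%N -> Q a' + Q b' <= Q c.
    move=> a' b' c habc hcn; rewrite /Q.
    have ha : (a' <= c)%N by apply: leq_trans habc; apply: leq_addr.
    have hb' : (b' <= c)%N by apply: leq_trans habc; apply: leq_addl.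
    case: (eqVneq c n) => [hc|hc].
      case: (eqVneq a' n) => [ha'|ha'].
        have hb0 : b' = 0%N by move: habc; rewrite ha' hc -{2}[n]addn0 leq_add2l leqn0 => /eqP.
        by rewrite hb0 /= ?hPhi00 ?addr0.
      case: (eqVneq b' n) => [hb''|hb''].
        have ha0 : a' = 0%N by move: habc; rewrite hb'' hc -{2}[n]add0n leq_add2r leqn0 => /eqP.
        by rewrite ha0 /= hPhi00 add0r.
      have := hsup0 _ _ _ habc; rewrite hc; lra.
    have hac : a' != n by apply/eqP => h; move/negP: hc; apply; rewrite eqn_leq hcn -h ha.
    have hbc : b' != n by apply/eqP => h; move/negP: hc; apply; rewrite eqn_leq hcn -h hb'.
    by rewrite (negbTE hac) (negbTE hbc); apply: hsup0.
  have hdQ : forall c, (c <= n)%N -> ((- Q c)%:E <= vT (d c))%E.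
    move=> c hc; rewrite /Q; case: eqP => [->|/eqP hcn]; first by rewrite opprK hfin.
    by apply: IH; rewrite ltn_neqAle hcn hc.
  have hB := stepB hv hQge hQsup hdQ.
  pose be := Num.min (- (p%:R * Phi n)) del.
  have hbe1 : be <= - (p%:R * Phi n) by rewrite ge_min lexx.
  have hbe2 : be <= del by rewrite ge_min lexx orbT.
  have hPn' : Phi n' <= Phi n by case: hgood => _ _ h _; apply: h.
  have hpPhi : Phi n <= p%:R * Phi n.
    have : 0 <= (p%:R - 1) * Phi n by rewrite mulr_ge0 //; lra.
    lra.
  have hterm : forall m : int, MA n be%:E (a m * v ^ m).
    move=> m.
    have hdecomp : forall x, MA n' be%:E x -> MA n be%:E (P * x).
      by move=> x hx; have := MA_PX 1 hx; rewrite expr1 add1n.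
    case: m => [j|j].
      case: (hb j) => b hbm ->.
      rewrite mulrDl; apply: MA_D.
        case: eqP => [->|_]; last by rewrite mul0r; apply: MA_0; apply: pm0.
        rewrite mul1r; have := hB p n (leqnn n); rewrite /Q eqxx opprK.
        by apply: MA_weak; rewrite lee_fin.
      rewrite -mulrA; apply: hdecomp.
      have := MA_M (hbm n') (hB j n' (leqnSn n')).
      rewrite /Q (_ : (n' == n) = false) ?add0e; last by rewrite /n eqn_leq ltnn andbF.
      by apply: MA_weak; rewrite lee_fin; lra.
    rewrite NegzE.
    case: (ltrP (K * lam ^+ n) (j.+1)%:R) => hM.
      apply: MA_0; apply: pmMr; first exact: hdec.
      by rewrite -exprnN -exprVn; oat.
    case: (hb (- (j.+1)%:Z)) => b hbm ->.
    rewrite (_ : (- (j.+1)%:Z == p%:Z) = false) ?addr0 ?add0r; last by [].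
    rewrite -mulrA; apply: hdecomp.
    rewrite -exprnN -exprVn.
    have := MA_M (hbm n') (hD j.+1 n' (leqnn n')).
    rewrite add0e; apply: MA_weak; rewrite lee_fin.
    have hPsi : Psi Phi n' <= Phi n' + 1.
      by rewrite /Psi; case: eqP => [->|_]; [rewrite hPhi00; lra | lra].
    have := hneg n' j.+1 hM; lra.
  have hyMA : MA n be%:E y.
    case: (hy n (- (p%:R * Phi n))) => N hN.
    rewrite -(subrK (\sum_(i < N.*2.+1) a (i%:Z - N%:Z) * v ^ (i%:Z - N%:Z)) y); apply: MA_D.
      by apply: MA_weak hN; rewrite lee_fin.
    by apply: MA_big => i _; apply: hterm.
  have := MA_LB hyMA hyd (leqnn n).
  have hp0 : 0 < p%:R :> R by lra.
  have hh1 : 0 <= (p%:R - 2) * (- del) by rewrite mulr_ge0 //; lra.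
  have hh2 : 0 < p%:R * (- Phi n - del) by rewrite mulr_gt0 //; lra.
  rewrite vTX // -/del lee_fin ge_min => /orP [h|h]; clear -h hh1 hh2 hlt hPhin0 hp2; lra.
have hall : forall n, ((- Phi n)%:E <= vT (d n))%E.
  by elim/ltn_ind => n IH; apply: key.
exists A => // n; apply: le_trans (hall n); rewrite lee_fin /Phi mulrBr opprB mulr1; lra.
Qed.


Lemma W0_dig m x d' : x \in OA -> Dig d' (P ^+ m * x) -> (forall i, (0 <= vT (d' i))%E) -> forall j, MA j 0%E x.
Proof.
move=> hx hd h j; have he := Dig_exists hx.
apply: (LB_MA he) => i _.
have := Dig_uniq0 (Dig_PX m he) hd (i + m).
by rewrite /= ltnNge leq_addl /= addnK => ->.
Qed.
Lemma W0_P b : b \in OA -> (forall j, MA j 0%E (P * b)) -> forall j, MA j 0%E b.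
Proof.
move=> hb h j; have he := Dig_exists hb.
apply: (LB_MA he) => i hi.
exact: (MA_LB (h i.+1) (Dig_P he) (leqnn i.+1)).
Qed.
Lemma W0_B x y : (forall j, MA j 0%E x) -> (forall j, MA j 0%E y) -> forall j, MA j 0%E (x - y).
Proof.
move=> hx hy j; rewrite -mulN1r; apply: MA_D => //; apply: MA_R0 => //.
by apply: R0N; apply: R0one.
Qed.


Variables (k : finFieldType) (ik : {rmorphism k -> C}) (T0 : C) (r : R)
  (sigma : (int -> L) -> (int -> L)).

Lemma powE_TE : forall j : nat, powE p L OA (TE L) j (fun n => if n == j%:Z then 1 else 0).
Proof.
elim=> [|j IH] /=.
  by apply: boolp.funext => n; rewrite /cstE.
exists (fun n => if n == j%:Z then 1 else 0); split => // n M.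
exists j => N hN.
have -> : symsum L (fun i => (if i == j%:Z then 1 else 0) * TE L (n - i)) N = if n == j.+1%:Z then 1 else 0.
  rewrite /symsum.
  have hi : (N + j < N.*2.+1)%N by rewrite -addnn ltnS leq_add2l.
  rewrite (bigD1 (Ordinal hi)) //= big1 ?addr0.
    have -> : ((N + j)%:Z - N%:Z) = j%:Z by rewrite PoszD addrAC subrr add0r.
    rewrite eqxx mul1r /TE.
    have -> : (n - j%:Z == 1) = (n == j.+1%:Z) by rewrite subr_eq -addn1 PoszD addrC.
    done.
  move=> i hi'; case: eqP => [h|_]; last by rewrite mul0r.
  exfalso; move/negP: hi'; apply; apply/eqP; apply: val_inj => /=.
  move: h => /(congr1 (fun x => x + N%:Z)); rewrite subrK -PoszD => -[->].
  by rewrite addnC.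
rewrite subrr; exists 0; [exact: oa0 | by rewrite mulr0].
Qed.

Lemma vT_ik (x : k) : (0%R <= vT (ik x))%E.
Proof.
 have [->|hx] := eqVneq x 0; first by rewrite rmorph0 vT0 leey.
have hc : ik x != 0 by rewrite fmorph_eq0.
have := expf_card x; move/(congr1 ik); rewrite rmorphXn => /(congr1 vT).
rewrite (vTX _ hc) {2}(vT_fin hc) => /eqP; rewrite eqe => /eqP h.
rewrite (vT_fin hc) lee_fin.
have h1 : (1 < #|k|)%N := card_finNzRing_gt1 k.
have : (#|k|%:R - 1) * fine (vT (ik x)) = 0 by rewrite mulrBl h mul1r subrr.
move/eqP; rewrite mulf_eq0 => /orP [|/eqP ->] //.
by rewrite subr_eq0 pnatr_eq1 gtn_eqF.
Qed.

Lemma final_core (v : L) (d : nat -> C) : Fhat_setup R k C ik vT T0 -> 0 < r ->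
  frobenius_endo R p k C ik L OA teich r sigma ->
  v \in OA -> teich_exp p C L OA teich d v ->
  vT (d 0%N) = 1%:E ->
  (exists2 y, FrobR p C L OA teich v y &
     weak_sum_to R p C vT L OA teich (fun n : int => sigma (TE L) n * v ^ n) y) ->
  exists2 c : R, 0 < c &
    forall n : nat, ((- ((p%:R : R) `^ (n%:R * r) * c))%:E <= vT (d n))%E.
Proof.
move=> HF hr HFE hvOA hvd hd0 [y hFrob hws].
have hTE_oa : forall n, TE L n \in OA.
  by move=> n; rewrite /TE; case: eqP => _; [exact: oa1 | exact: oa0].
have hinK1 : inK p k C ik L OA teich 1.
  exists 0%N; exists (fun i => if i == 0%N then 1 else 0).
    by rewrite expr0 mulr1 -teich1; exact: Dig_teich1.
  by move=> n; case: eqP => _; [exists 1; rewrite rmorph1 | exists 0; rewrite rmorph0].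
have hinK0 : inK p k C ik L OA teich 0.
  exists 0%N; exists (fun i => if i == 0%N then 0 else 0).
    by rewrite expr0 mulr0 -teich0; exact: Dig_teich1.
  by move=> n; case: eqP => _; exists 0; rewrite rmorph0.
have hvp0 : forall t : R, vp_ge R p L OA 0 t.
  move=> t; exists (Num.ceil t); first exact: ceil_ge.
  by exists 0; [exact: oa0 | rewrite mulr0].
have hTE_Er : inEr R p k C ik L OA teich r (TE L).
  split; first by move=> n; rewrite /TE; case: eqP.
  split.
    exists 0 => n; rewrite /TE; case: eqP => _; last exact: hvp0.
    by exists 0 => //; exists 1; [exact: oa1 | rewrite expr0z mulr1].
  exists 0 => n hn; rewrite /TE; case: eqP => [h|_]; last exact: hvp0.
  by move: hn; rewrite h.
set a := sigma (TE L).
have ha_oa : forall m, a m \in OA by move=> m; exact: (fe_int _ _ _ _ _ _ _ _ _ _ HFE (TE L) hTE_Er hTE_oa m).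
have haEr := fe_stable _ _ _ _ _ _ _ _ _ _ HFE (TE L) hTE_Er.
have ha_K : forall m, inK p k C ik L OA teich (a m) by case: haEr.
have hmodp := fe_modp _ _ _ _ _ _ _ _ _ _ HFE (TE L) _ hTE_Er hTE_oa (powE_TE p).
have hvik := vT_ik.
have hW0a : forall m j, MA j 0%E (a m).
  move=> m; case: (ha_K m) => m0 [d' hd' hk].
  apply: (W0_dig (ha_oa m) hd') => i.
  by case: (hk i) => x ->.
have hb : forall m, exists2 b, (forall j, MA j 0%E b) &
     a m = (if m == p%:Z then 1 else 0) + (p%:R : L) * b.
  move=> m; case: (hmodp m) => b hbo hE.
  rewrite expr1z in hE.
  exists b; last by rewrite -hE addrC subrK.
  apply: (W0_P hbo) => j; rewrite -hE.
  apply: (W0_B (hW0a m)) => j'.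
  case: eqP => _; first by apply: MA_one.
  by apply: MA_0; apply: pm0.
case: haEr => _ [_ [c1 hc1]].
have hp1 : 1 < (p%:R : R) by rewrite ltr1n prime_gt1.
have hp0 : 0 < (p%:R : R) by apply: lt_trans hp1.
pose lam := (p%:R : R) `^ r.
pose K := (p%:R : R) `^ (- (r * c1)).
have hlam : 1 < lam.
  have h1 : (1 : R) `^ r = 1 by rewrite powR1.
  rewrite /lam -{1}h1; apply: gt0_ltr_powR => //; rewrite nnegrE ?ler01 // ltW.
have hK : 0 < K by apply: powR_gt0.
have hdec : forall (M n : nat), K * lam ^+ n < M%:R -> pm n.+1 (a (- M%:Z)).
  move=> M n hM.
  have hlam0 : 0 < lam by apply: lt_trans hlam.
  have hKl : 0 < K * lam ^+ n by rewrite mulr_gt0 // exprn_gt0.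
  have hMpos : 0 < M%:R :> R by apply: lt_trans hKl hM.
  have hM0 : (0 < M)%N by rewrite -(ltr0n R).
  have hneg : - M%:Z < 0 by rewrite oppr_lt0 ltz_nat.
  case: (hc1 _ hneg) => e he [b hbo hE].
  rewrite opprK in he.
  have hlnp : 0 < ln (p%:R : R) := ln_gt0 hp1.
  have hlnM : ln (K * lam ^+ n) < ln (M%:R : R) by rewrite ltr_ln ?posrE.
  have hlnK : ln (K * lam ^+ n) = (n%:R - c1) * r * ln (p%:R : R).
    rewrite lnM ?posrE ?exprn_gt0 // lnXn // !ln_powR -mulr_natr; ring.
  have hne : ((n%:Z)%:~R : R) < e%:~R.
    change ((n%:Z)%:~R : R) with (n%:R : R).
    apply: (lt_le_trans _ he); rewrite /logp.
    change ((M%:Z)%:~R : R) with (M%:R : R).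
    suff : n%:R - c1 < ln (M%:R : R) / ln (p%:R : R) / r by lra.
    rewrite ltr_pdivlMr // ltr_pdivlMr //; lra.
  rewrite ltr_int in hne.
  case: e hE hne {he} => [e'|e'] hE hne; last by [].
  rewrite ltz_nat in hne.
  exists (P ^+ (e' - n.+1) * b); first by oat.
  by rewrite /a hE mulrA -exprD subnKC.
have hy : forall (n : nat) (be : R), exists N : nat,
     MA n be%:E (y - \sum_(i < N.*2.+1) a (i%:Z - N%:Z) * v ^ (i%:Z - N%:Z)).
  move=> n be; case: (hws n be) => N hN; exists N.
  case: (hN N (leqnn N)) => hoa hsm.
  exact: (LB_MA (Dig_exists hoa) (hsm _ (Dig_exists hoa))).
case: hFrob => m [d' hd1 hd2].
have hdv := Dig_PX m hvd.
have eq1 := Dig_uniq0 hdv hd1.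
have hy0 : y \in OA.
  have hpm : pm m (P ^+ m * y).
    have : pm m (P ^+ m * y - tsum (fun n => d' n ^+ p) m) := hd2 m.
    rewrite (_ : tsum (fun n => d' n ^+ p) m = 0) ?subr0 //.
    rewrite /tsum big1 // => i _.
    by rewrite -eq1 ltn_ord expr0n (gtn_eqF (prime_gt0 Hp)) teich0 mul0r.
  case: hpm => z hz hE.
  suff -> : y = z by [].
  by apply: (mulfI (expf_neq0 m P_neq0)).
have hey := Dig_exists hy0.
have eq2 := Dig_uniq0 (Dig_PX m hey) hd2.
have hyd : Dig (fun i => d i ^+ p) y.
  suff -> : (fun i => d i ^+ p) = (fun n => red (xs y n)) by [].
  apply: boolp.funext => i.
  have := eq2 (i + m); have := eq1 (i + m).
  by rewrite /= ltnNge leq_addl /= addnK => -> ->.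
have [A hA hbd] := main_bound hvd hd0 hb hlam hK hdec hy hyd.
exists A => // n.
have -> : (p%:R : R) `^ (n%:R * r) = lam ^+ n by rewrite mulrC powRrM powR_mulrn // powR_ge0.
by rewrite mulrC.
Qed.

End Part1.



Unset Implicit Arguments.

Theorem lemma4p4 (R : realType) (p : nat) (k : finFieldType) (C : closedFieldType)
    (ik : {rmorphism k -> C}) (vT : C -> \bar R) (T0 : C)
    (L : fieldType) (OA : {pred L}) (red : L -> C) (teich : C -> L)
    (r : R) (sigma : (int -> L) -> (int -> L)) (v : L) (d : nat -> C) :
  prime p -> p \in [pchar k] ->
  Fhat_setup R k C ik vT T0 ->
  strict_p_setup p C L OA red teich ->
  0 < r ->
  frobenius_endo R p k C ik L OA teich r sigma ->
  v \in OA -> teich_exp p C L OA teich d v ->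
  vT (d 0%N) = 1%:E ->
  (exists2 y, FrobR p C L OA teich v y &
     weak_sum_to R p C vT L OA teich (fun n : int => sigma (TE L) n * v ^ n) y) ->
  exists2 c : R, 0 < c &
    forall n : nat, ((- ((p%:R : R) `^ (n%:R * r) * c))%:E <= vT (d n))%E.
Proof.
move=> Hp Hchar HF HS hr HFE hvOA hvd hd0 hy.
have Hval : is_valuation R C vT by case: HF.
exact: (final_core Hp HS Hval HF hr HFE hvOA hvd hd0 hy).
Qed.
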